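(* Let $m\ge3$, $C$ a set of $m$ candidates, $T$ the set of all $m!$ strict rankings of $C$, $w=(w_1,\dots,w_m)$ with $1=w_1\ge\cdots\ge w_m=0$, and $\sigma_t(\alpha)=w_i$ where $i$ is the position of $\alpha$ in $t\in T$. Let $(N_t)_{t\in T}$ be nonnegative integers and $|\alpha|=\sum_tN_t\sigma_t(\alpha)$. Suppose $|a|>|\alpha|$ for all $\alpha\ne a$, and $b\ne a$ satisfies $|b|\ge|\alpha|$ for all $\alpha\ne a$. Let $\bar T_{ba}$ be the set of types ranking $b$ above $a$, $T_b$ the set of types ranking $b$ first, $T_i$ ($1\le i\le m-1$) the set of types ranking $b$ in position $i$ and $a$ in position $i+1$, and $T_{ba}=\bigcup_{i=1}^{m-1}T_i$. Let $Q_3(b)$ be the optimal value (or $+\infty$ if infeasible) of: minimize $\sum_{t\in\bar T_{ba}}x_t$ subject to $$\sum_{t\in T_b}y_t(1-\sigma_t(\alpha))-\sum_{t\in\bar T_{ba}}x_t(\sigma_t(b)-\sigma_t(\alpha))\ge|\alpha|-|b|\quad\forall\alpha\ne b,$$ $\sum_{t\in T_b}y_t=\sum_{t\in\bar T_{ba}}x_t$, $x_t\ge0$, $y_t\ge0$ (real variables). Let $Q$ be the optimal value (or $+\infty$ if infeasible) of the same linear program with $\bar T_{ba}$ replaced by $T_{ba}$ throughout (in the objective, in the constraints, and in the index set of the variables $x_t$). Then $Q_3(b)=Q$. *)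

(* Defs.v *)
From HB Require Import structures.
From mathcomp Require Import all_boot all_order all_algebra.
From mathcomp Require Import all_classical all_reals ereal.
Set Implicit Arguments. Unset Strict Implicit. Unset Printing Implicit Defensive.
Import Order.TTheory GRing.Theory Num.Theory.
Local Open Scope ring_scope.
Local Open Scope classical_set_scope.

Section Voting.
Variables (R : realType) (C : finType) (m : nat).

(* A strict ranking of C: an injective map candidate -> position (0-indexed,
   position 0 = top).  Since #|C| = m these are exactly the m! bijections. *)
Definition ranking := {ffun C -> 'I_m}.
Definition rankings : {set ranking} := [set t : ranking | injectiveb t].

(* weight vector w : nat -> R, w i = paper's w_{i+1} *)
Definition sigma (w : nat -> R) (t : ranking) (al : C) : R := w (t al).

Definition score (w : nat -> R) (N : ranking -> nat) (al : C) : R :=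
  \sum_(t in rankings) (N t)%:R * sigma w t al.

Definition Tbar_ba (a b : C) : {set ranking} :=
  [set t in rankings | (t b < t a)%N].
Definition T_b (b : C) : {set ranking} :=
  [set t in rankings | (t b == 0 :> nat)].
(* T_i (paper, 1 <= i <= m-1): b in position i and a in position i+1;
   here indexed 0-based by i < m-1 : b at 0-based position i, a at i+1 *)
Definition T_i (a b : C) (i : nat) : {set ranking} :=
  [set t in rankings | (t b == i :> nat) && (t a == i.+1 :> nat)].
Definition T_ba (a b : C) : {set ranking} :=
  \bigcup_(i < m.-1) T_i a b i.

Definition LPfeasible (w : nat -> R) (N : ranking -> nat) (a b : C)
    (S : {set ranking}) (x y : ranking -> R) : Prop :=
  [/\ forall al, al != b ->
        \sum_(t in T_b b) y t * (1 - sigma w t al)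
        - \sum_(t in S) x t * (sigma w t b - sigma w t al)
        >= score w N al - score w N b,
      \sum_(t in T_b b) y t = \sum_(t in S) x t,
      forall t, t \in S -> 0 <= x t &
      forall t, t \in T_b b -> 0 <= y t].

(* optimal value (infimum; +oo if infeasible) *)
Definition LPvalue (w : nat -> R) (N : ranking -> nat) (a b : C)
    (S : {set ranking}) : \bar R :=
  ereal_inf [set z : \bar R | exists x y, LPfeasible w N a b S x y /\
                               z = (\sum_(t in S) x t)%:E].

End Voting.

(* Main.v *)
Require Import Defs.
From HB Require Import structures.
From mathcomp Require Import all_boot all_order all_algebra.
From mathcomp Require Import all_classical all_reals ereal.
From mathcomp Require Import zify lra.
Import Order.TTheory GRing.Theory Num.Theory.
Local Open Scope ring_scope.

Ltac gen := repeat match goal with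
 | H : ?P |- _ => match type of P with Prop => revert H end
 end;
 repeat match goal with
 | |- context [@nat_of_ord ?m (@fun_of_fin _ _ _ ?t ?c)] =>
     let x := fresh "x" in set x := @nat_of_ord m (@fun_of_fin _ _ _ t c); clearbody x
 end; intros.
Ltac L := gen; repeat match goal with H : context [predn _] |- _ => rewrite -subn1 in H end; rewrite -?subn1; lia.

Section Aux.
Variables (C : finType) (m : nat) (a b : C).

Definition prd (k : 'I_m) : 'I_m := Ordinal (leq_ltn_trans (leq_pred k) (ltn_ord k)).

Definition mv (t : ranking C m) : ranking C m :=
  [ffun c => if c == b then prd (t a)
             else if ((t b < t c) && (t c < t a))%N then prd (t c) else t c].

Lemma mvE t c : nat_of_ord (mv t c) =
  if c == b then (t a).-1 else if ((t b < t c) && (t c < t a))%N then (t c).-1 else t c.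
Proof. by rewrite ffunE; case: ifP => //; case: ifP. Qed.

Hypothesis hba : b != a.

Ltac nrm H := let H2 := fresh "H" in first [ move/andP: H => [H H2] | move/negbT/nandP: H => [H|H]; rewrite -leqNgt in H ].

Lemma mv_in t : t \in Tbar_ba m a b -> mv t \in T_ba m a b.
Proof.
rewrite inE => /andP [tr lt]; rewrite inE in tr.
have tinj := injectiveP _ tr.
have Hn c : c != b -> (nat_of_ord (t c) != nat_of_ord (t b)).
  by move=> cb; apply/negP => /eqP /val_inj /tinj /eqP; rewrite (negbTE cb).
have lm : ((t a).-1 < m.-1)%N.
  have := ltn_ord (t a); rewrite -subn1; lia.
apply/bigcupP; exists (Ordinal lm) => //.
rewrite !inE; apply/and3P; split.
- apply/injectiveP => c1 c2 /(congr1 (@nat_of_ord m)); rewrite !mvE.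
  have H1 := Hn c1; have H2 := Hn c2.
  case: (eqVneq c1 b) => [->|n1]; case: (eqVneq c2 b) => [->|n2] //=.
  + move: H2 => /(_ n2); case: ifP => /= C2 H2 E; exfalso; nrm C2; L.
  + move: H1 => /(_ n1); case: ifP => /= C1 H1 E; exfalso; nrm C1; L.
  + move: (H1 n1) (H2 n2) => {H1 H2} H1 H2.
    move=> E; apply: tinj; apply: val_inj; move: E.
    case: ifP => /= C1; case: ifP => /= C2 E; nrm C1; nrm C2; L.
- by rewrite mvE eqxx.
- have hab : (a == b) = false by rewrite eq_sym (negbTE hba).
  rewrite mvE hab /= ltnn andbF.
  apply/eqP; L.
Qed.

Lemma mv_sigma (R : realType) (w : nat -> R)
  (hwdec : forall i j : nat, (i <= j)%N -> (j < m)%N -> w j <= w i)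
  t al : t \in Tbar_ba m a b -> al != b ->
  sigma w (mv t) b - sigma w (mv t) al <= sigma w t b - sigma w t al.
Proof.
rewrite inE => /andP [tr lt] ab; rewrite /sigma !mvE eqxx (negbTE ab). 
have ha := ltn_ord (t a); have hal := ltn_ord (t al).
case: ifP => /andP.
- case=> l1 l2.
  have e1 : w (t a).-1 <= w (t al).-1 by apply: hwdec; L.
  have e2 : w (t al) <= w (t b) by apply: hwdec; L.
  have e3 : w (t al).-1 - w (t al).-1 = 0 by rewrite subrr.
  lra.
- move=> _.
  have : w (t a).-1 <= w (t b) by apply: hwdec; L.
  lra.
Qed.

Lemma Tba_sub : T_ba m a b \subset Tbar_ba m a b.
Proof.
apply/fintype.subsetP => t /bigcupP [i _]; rewrite !inE => /and3P [r /eqP e1 /eqP e2].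
by rewrite r /= e1 e2.
Qed.

Lemma sum_if (R : realType) (g : ranking C m -> R) :
  \sum_(t in Tbar_ba m a b) (if t \in T_ba m a b then g t else 0) =
  \sum_(t in T_ba m a b) g t.
Proof.
rewrite -big_mkcondr; apply: eq_bigl => t.
case: (boolP (t \in T_ba m a b)) => h; last by rewrite andbF.
by rewrite andbT (fintype.subsetP Tba_sub).
Qed.

Lemma sum_mv (R : realType) (x F : ranking C m -> R) :
  \sum_(s in Tbar_ba m a b) x s * F (mv s) =
  \sum_(j in T_ba m a b) (\sum_(s in Tbar_ba m a b | mv s == j) x s) * F j.
Proof.
rewrite (partition_big mv (fun j => j \in T_ba m a b)); last by move=> s; apply: mv_in.
apply: eq_bigr => j _; rewrite mulr_suml; apply: eq_bigr => s /andP [_ /eqP ->].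
done.
Qed.

Lemma sum_mv1 (R : realType) (x : ranking C m -> R) :
  \sum_(s in Tbar_ba m a b) x s =
  \sum_(j in T_ba m a b) (\sum_(s in Tbar_ba m a b | mv s == j) x s).
Proof.
rewrite (partition_big mv (fun j => j \in T_ba m a b)); last by move=> s; apply: mv_in.
done.
Qed.

End Aux.


Theorem proposition8 (R : realType) (C : finType) (m : nat)
  (hm : (3 <= m)%N) (hC : #|C| = m)
  (w : nat -> R) (hw1 : w 0%N = 1) (hwm : w m.-1 = 0)
  (hwdec : forall i j : nat, (i <= j)%N -> (j < m)%N -> w j <= w i)
  (N : ranking C m -> nat) (a b : C)
  (ha : forall al : C, al != a -> score w N al < score w N a)
  (hba : b != a)
  (hb : forall al : C, al != a -> score w N al <= score w N b) :
  LPvalue w N a b (@Tbar_ba C m a b) = LPvalue w N a b (@T_ba C m a b).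
Proof.
rewrite /LPvalue; congr ereal_inf; apply/seteqP; split => z /= [x [y [[H1 H2 H3 H4] ->]]].
- exists (fun j => \sum_(s in Tbar_ba m a b | @mv C m a b s == j) x s), y; split; last first.
    by rewrite sum_mv1.
  split.
  + move=> al alb; apply: le_trans (H1 al alb) _.
    rewrite lerD2l lerN2 -sum_mv //.
    apply: ler_sum => s hs; apply: ler_wpM2l; first exact: H3.
    exact: mv_sigma.
  + by rewrite H2 sum_mv1.
  + by move=> t _; apply: sumr_ge0 => s /andP [hs _]; apply: H3.
  + exact: H4.
- exists (fun t => if t \in T_ba m a b then x t else 0), y; split; last first.
    by rewrite sum_if.
  have E F : \sum_(t in Tbar_ba m a b) (if t \in T_ba m a b then x t else 0) * F t =
             \sum_(t in T_ba m a b) x t * F t.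
    rewrite -sum_if; apply: eq_bigr => t _; by case: ifP; rewrite ?mul0r.
  split.
  + by move=> al alb; rewrite E; apply: H1.
  + by rewrite H2 sum_if.
  + by move=> t _; case: ifP => // h; apply: H3.
  + exact: H4.
Qed.
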